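(* Let $x,y$ be distinct odd primes with Legendre symbol $\left(\frac{x}{y}\right)=-1$. Then $x$ is balanced modulo $y$.
   Context: For positive integers $n,m$ with $\gcd(n,m)=1$, $n$ is said to be not balanced modulo $m$ iff there exists an odd Dirichlet character $\chi$ modulo $m$ (i.e. $\chi(-1)=-1$) such that $\chi(n)=1$ and $\sum_{0<k<m/2}\chi(k)\neq0$; otherwise $n$ is balanced modulo $m$. *)

(* Defs.v *)
From mathcomp Require Import all_boot all_order all_algebra.
From mathcomp Require Import algC.
Set Implicit Arguments. Unset Strict Implicit. Unset Printing Implicit Defensive.
Import GRing.Theory Num.Theory.
Local Open Scope ring_scope.

Definition dirichlet_char (m : nat) (chi : nat -> algC) : Prop :=
  [/\ chi 1%N = 1,
      forall a b : nat, chi (a * b)%N = chi a * chi b,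
      forall a : nat, chi (a + m)%N = chi a
    & forall a : nat, (chi a != 0) = coprime a m].

(* chi(-1) = -1, where -1 is represented by m - 1 modulo m. *)
Definition odd_char (m : nat) (chi : nat -> algC) : Prop :=
  chi m.-1 = -1.

Definition half_sum (m : nat) (chi : nat -> algC) : algC :=
  \sum_(1 <= k < m | (k.*2 < m)%N) chi k.

Definition not_balanced (n m : nat) : Prop :=
  exists chi : nat -> algC,
    [/\ dirichlet_char m chi, odd_char m chi, chi n = 1 & half_sum m chi != 0].

Definition balanced (n m : nat) : Prop := ~ not_balanced n m.

(* a is a square mod p; every residue has a representative z < p. *)
Definition is_qr (a p : nat) : bool := [exists z : 'I_p, (z ^ 2 == a %[mod p])%N].

Definition legendre (a p : nat) : int :=
  if (p %| a)%N then 0%R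
  else if is_qr a p then 1%R else (-1)%R.

(* Main.v *)
Require Import Defs.
From mathcomp Require Import all_boot all_order all_algebra.
From mathcomp Require Import algC finfield zify.
Import GRing.Theory Num.Theory.
Local Open Scope ring_scope.

Lemma euler_nonres (x p : nat) : prime p -> odd p -> ~~ (p %| x)%N -> ~~ is_qr x p ->
  (x ^ p.-1./2 + 1 = 0 %[mod p])%N.
Proof.
move=> pp op ndx nqr.
have p_gt2 : (2 < p)%N.
  have := prime_gt1 pp; case: p pp op {ndx nqr} => [|[|[|q]]] //.
set h := p.-1./2.
have h_gt0 : (0 < h)%N by rewrite /h; case: p p_gt2 {pp op ndx nqr h} => [|[|[|q]]].
have p2h : p.-1 = (h * 2)%N.
  rewrite /h; case: p p_gt2 op {pp ndx nqr h h_gt0} => // q _ /= oq.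
  by rewrite -[in LHS](odd_double_half q) (negbTE oq) add0n -mul2n mulnC.
have hp : (h < p)%N by lia.
pose F := 'F_p.
have natF a b : (a%:R == b%:R :> F) = (a == b %[mod p])%N.
  apply/eqP/eqP => [E|E]; last by rewrite -Fp_nat_mod // E Fp_nat_mod.
  by have := congr1 val E; rewrite /= !val_Fp_nat.
have nz a : ~~ (p %| a)%N -> (a%:R : F) != 0.
  move=> na; apply: contra na; have := natF a 0; rewrite mod0n => ->.
  by rewrite /dvdn.
have ferm (z : F) : z != 0 -> z ^+ p.-1 = 1.
  move=> z0; apply: (mulfI z0); rewrite -exprS prednK ?prime_gt0 //.
  by have := expf_card z; rewrite card_Fp // => ->; rewrite mulr1.
have hx2 : ((x%:R : F) ^+ h) ^+ 2 = 1 by rewrite -exprM -p2h ferm ?nz.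
suff : (x%:R : F) ^+ h = -1.
  by move=> E; apply/eqP; rewrite -natF natrD natrX E addNr.
move/eqP: hx2; rewrite sqrf_eq1 => /orP [/eqP hx1|/eqP //].
exfalso.
pose rs := (x%:R : F) :: [seq (i%:R : F) ^+ 2 | i <- iota 1 h].
have ndv i : (0 < i)%N -> (i < p)%N -> ~~ (p %| i)%N.
  by move=> i0 ip; apply/negP => /dvdn_leq; lia.
have : (size rs < size ('X^h - 1 : {poly F})%R)%N.
  apply: max_poly_roots.
  - by rewrite -size_poly_gt0 size_Xn_sub_1.
  - apply/allP => z; rewrite /root !hornerE subr_eq0 inE => /orP [/eqP -> | ].
      by rewrite hx1.
    move=> /mapP [i]; rewrite mem_iota => /andP [i1 i2] ->.
    by rewrite -exprM mulnC -p2h ferm // nz // ndv //; lia.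
  - rewrite /rs /= map_inj_in_uniq ?iota_uniq ?andbT.
      apply/mapP => [[i]]; rewrite mem_iota => /andP [i1 i2] /eqP.
      rewrite eq_sym -natrX natF => qr; move/negP: nqr; apply.
      have ip : (i < p)%N by lia.
      by rewrite /is_qr; apply/existsP; exists (Ordinal ip).
    move=> i j; rewrite !mem_iota => /andP [i1 i2] /andP [j1 j2] /eqP.
    rewrite eqf_sqr => /orP [|].
      by rewrite natF !modn_small; [move/eqP| lia | lia].
    rewrite -addr_eq0 -natrD => /eqP E.
    have ij1 : (0 < i + j)%N by lia.
    have ij2 : (i + j < p)%N by lia.
    by move: (nz _ (ndv _ ij1 ij2)); rewrite E eqxx.
by rewrite size_Xn_sub_1 //= size_map size_iota ltnn.
Qed.

Lemma chi_mod m chi a : dirichlet_char m chi -> chi a = chi (a %% m)%N.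
Proof.
move=> [_ _ cper _]; rewrite {1}(divn_eq a m).
elim: (a %/ m)%N => [|k IH]; first by rewrite mul0n add0n.
by rewrite mulSn -addnA addnC cper.
Qed.

Lemma chi_exp m chi a n : dirichlet_char m chi -> chi (a ^ n)%N = chi a ^+ n.
Proof.
move=> [c1 cm _ _]; elim: n => [|n IH]; first by rewrite expn0 expr0.
by rewrite expnS cm IH exprS.
Qed.

Theorem lemma4p5 (x y : nat) :
  prime x -> prime y -> odd x -> odd y -> x <> y ->
  legendre x y = (-1)%R ->
  balanced x y.
Proof.
move=> px py ox oy nxy.
rewrite /legendre; case: ifP => [_ /eqP //|ndx]; case: ifP => [_ /eqP //|nqr] _.
move=> [chi [dc codd cx _]].
have E := @euler_nonres x y py oy (negbT ndx) (negbT nqr).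
set h := (y.-1./2)%N in E.
have y0 : (0 < y)%N := prime_gt0 py.
have r : (x ^ h %% y)%N = y.-1.
  have rl : (x ^ h %% y < y)%N by rewrite ltn_mod.
  move: E; rewrite -modnDml mod0n => /eqP; rewrite -/(dvdn _ _) => /dvdn_leq.
  rewrite addn1 ltn0Sn => /(_ isT) H; lia.
have : chi (x ^ h)%N = chi y.-1 by rewrite (@chi_mod y chi _ dc) r.
rewrite (@chi_exp y chi _ _ dc) cx expr1n codd => /eqP.
rewrite -subr_eq0 opprK => /eqP H; have : ((1 + 1)%N%:R : algC) == 0 by rewrite natrD H.
  by rewrite pnatr_eq0.
Qed.
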